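(* Let $w:2^{[m]}\to\mathbb{R}_{\ge0}$ be additive, and let $\mathcal P=(P_1,\dots,P_n)$ and $\mathcal Q=(Q_1,\dots,Q_n)$ be two $n$-partitions of $[m]$ that are both $\mathrm{EF1}$ with respect to $w$. Then the sequence $(w(P_i))_{i=1}^n$ $\tfrac12$-majorizes the sequence $(w(Q_i))_{i=1}^n$.
   Context: $w$ additive means $w(S)=\sum_{g\in S}w(g)$. An $n$-partition $(S_1,\dots,S_n)$ of $[m]$ (parts may be empty) is $\mathrm{EF1}$ with respect to $w$ if for all $i,j\in[n]$ with $S_j\ne\emptyset$ there is $g\in S_j$ with $w(S_i)\ge w(S_j)-w(g)$. For $\beta\in\mathbb{R}_{\ge0}$, a sequence $(x_i)_{i=1}^n$ $\beta$-majorizes $(y_i)_{i=1}^n$ if $\sum_{i=1}^k x_{(i)}\ge\beta\sum_{i=1}^k y_{(i)}$ for all $1\le k\le n-1$ and $\sum_{i=1}^n x_i=\sum_{i=1}^n y_i$, where $x_{(i)}$, $y_{(i)}$ denote the $i$-th largest entries. *)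

(* Defs.v *)
From HB Require Import structures.
From mathcomp Require Import all_boot all_order all_algebra.
Set Implicit Arguments. Unset Strict Implicit. Unset Printing Implicit Defensive.
Import Order.TTheory GRing.Theory Num.Theory.
Local Open Scope ring_scope.

(* Additive valuation induced by per-good weights w : 'I_m -> R. *)
Definition wset (R : realFieldType) (m : nat) (w : 'I_m -> R) (S : {set 'I_m}) : R :=
  \sum_(g in S) w g.

Definition is_npartition (m n : nat) (S : 'I_n -> {set 'I_m}) : Prop :=
  (forall g : 'I_m, exists i : 'I_n, g \in S i) /\
  (forall (i j : 'I_n) (g : 'I_m), g \in S i -> g \in S j -> i = j).

Definition EF1 (R : realFieldType) (m n : nat) (w : 'I_m -> R)
    (S : 'I_n -> {set 'I_m}) : Prop :=
  forall i j : 'I_n, S j != set0 ->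
    exists2 g, g \in S j & wset w (S j) - w g <= wset w (S i).

Definition sorted_desc (R : realFieldType) (n : nat) (x : 'I_n -> R) : seq R :=
  sort (fun a b : R => b <= a) [seq x i | i : 'I_n].

Definition topk_sum (R : realFieldType) (n : nat) (x : 'I_n -> R) (k : nat) : R :=
  \sum_(a <- take k (sorted_desc x)) a.

Definition beta_majorizes (R : realFieldType) (n : nat) (beta : R)
    (x y : 'I_n -> R) : Prop :=
  (forall k : nat, (1 <= k <= n.-1)%N -> beta * topk_sum y k <= topk_sum x k) /\
  \sum_(i < n) x i = \sum_(i < n) y i.

(* Main.v *)
Require Import Defs.
From HB Require Import structures.
From mathcomp Require Import all_boot all_order all_algebra.
From mathcomp Require Import zify ring lra.
Import Order.TTheory GRing.Theory Num.Theory.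
Local Open Scope ring_scope.

Lemma topk_split (R : realFieldType) (n : nat) (x : 'I_n -> R) (k : nat) :
  (k <= n)%N ->
  exists T : {set 'I_n}, [/\ topk_sum x k = \sum_(i in T) x i, #|T| = k &
     forall a b, a \notin T -> b \in T -> x a <= x b].
Proof.
move=> kn.
pose r := sort (relpre x (fun a b : R => b <= a)) (enum 'I_n).
have pr : perm_eq r (enum 'I_n) by rewrite perm_sort.
have ur : uniq r by rewrite (perm_uniq pr) enum_uniq.
have sr : size r = n by rewrite (perm_size pr) size_enum_ord.
have so : sorted (relpre x (fun a b : R => b <= a)) r.
  by apply: sort_sorted => a b /=; apply: le_total.
have ss : sorted_desc x = map x r by rewrite /sorted_desc sort_map.
exists [set i in take k r]; split.
- rewrite /topk_sum ss -map_take big_map big_uniq ?take_uniq //.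
  by apply: eq_bigl => i; rewrite inE.
- rewrite cardsE (card_uniqP _) ?take_uniq // size_takel ?sr // .
- move=> a b; rewrite !inE => na bt.
  have tr : transitive (relpre x (fun a b : R => b <= a)).
    by move=> y z t /= h1 h2; apply: le_trans h2 h1.
  move: so; rewrite (sorted_pairwise tr) -(cat_take_drop k r) pairwise_cat.
  case/and3P => /allrelP H _ _.
  have ad : a \in drop k r.
    have : a \in r by rewrite (perm_mem pr) mem_enum.
    by rewrite -{1}(cat_take_drop k r) mem_cat (negbTE na).
  exact: (H b a bt ad).
Qed.
Lemma cross (R : realFieldType) (n : nat) (x : 'I_n -> R) (A B : {set 'I_n}) :
  (forall a b, a \in A -> b \in B -> x a <= x b) ->
  #|B|%:R * \sum_(i in A) x i <= #|A|%:R * \sum_(i in B) x i.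
Proof.
move=> H.
have e1 : #|B|%:R * \sum_(i in A) x i = \sum_(b in B) \sum_(a in A) x a.
  by rewrite sumr_const mulr_natl.
have e2 : #|A|%:R * \sum_(i in B) x i = \sum_(a in A) \sum_(b in B) x b.
  by rewrite sumr_const mulr_natl.
rewrite e1 e2 [X in _ <= X]exchange_big /=.
by apply: ler_sum => b bB; apply: ler_sum => a aA; apply: H.
Qed.

Lemma topk_ge (R : realFieldType) (n : nat) (x : 'I_n -> R) (k : nat) (I : {set 'I_n}) :
  (forall i, 0 <= x i) -> (k <= n)%N -> (#|I| <= k)%N ->
  \sum_(i in I) x i <= topk_sum x k.
Proof.
move=> x0 kn Ik.
have [T [-> cT HT]] := @topk_split _ _ x _ kn.
rewrite (big_setID (A := I) T) (big_setID (A := T) I) /= setIC lerD2l.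
set A := I :\: T; set B := T :\: I.
have C := @cross R n x A B.
have C' : #|B|%:R * \sum_(i in A) x i <= #|A|%:R * \sum_(i in B) x i.
  apply: C => a b; rewrite !inE => /andP [aT _] /andP [_ bT]; exact: HT.
have cAB : (#|A| <= #|B|)%N.
  have h1 := cardsID T I; have h2 := cardsID I T.
  rewrite setIC in h2; rewrite -/A -/B in h1 h2; lia.
have sB : 0 <= \sum_(i in B) x i by apply: sumr_ge0.
have [B0|Bpos] := posnP #|B|.
  have : #|A| = 0%N by lia.
  by move/eqP; rewrite cards_eq0 => /eqP ->; rewrite big_set0.
rewrite -(@ler_pM2l _ (#|B|%:R)) ?ltr0n //.
apply: le_trans C' _; apply: ler_wpM2r => //; by rewrite ler_nat.
Qed.

Lemma topk_avg (R : realFieldType) (n : nat) (x : 'I_n -> R) (k : nat) :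
  (k <= n)%N -> k%:R * \sum_i x i <= n%:R * topk_sum x k.
Proof.
move=> kn.
have [T [-> cT HT]] := @topk_split _ _ x _ kn.
have C := @cross R n x (~: T) T.
have C' : #|T|%:R * \sum_(i in ~: T) x i <= #|~: T|%:R * \sum_(i in T) x i.
  by apply: C => a b; rewrite inE; apply: HT.
have cC : #|~: T| = (n - k)%N by have := cardsC T; rewrite card_ord cT; lia.
rewrite cC cT natrB // in C'.
rewrite (bigID (mem T)) /=.
have -> : \sum_(i | i \notin T) x i = \sum_(i in ~: T) x i.
  by apply: eq_bigl => i; rewrite inE.
rewrite mulrDr.
have -> : n%:R * \sum_(i in T) x i = k%:R * \sum_(i in T) x i + (n%:R - k%:R) * \sum_(i in T) x i by ring.
by rewrite lerD2l.
Qed.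

Lemma sum_part (R : realFieldType) (m n : nat) (w : 'I_m -> R) (S : 'I_n -> {set 'I_m}) :
  is_npartition S -> \sum_i wset w (S i) = \sum_g w g.
Proof.
case=> cov dis; rewrite /wset.
under eq_bigr => i _ do rewrite big_mkcond.
rewrite exchange_big /=; apply: eq_bigr => g _.
have [i gi] := cov g.
rewrite (bigD1 i) //= gi big1 ?addr0 // => j ji.
case: ifP => // gj.
by rewrite (dis _ _ _ gj gi) eqxx in ji.
Qed.

Theorem lemma2 (R : realFieldType) (m n : nat) (w : 'I_m -> R)
    (P Q : 'I_n -> {set 'I_m}) :
  (forall g, 0 <= w g) ->
  is_npartition P -> is_npartition Q ->
  EF1 w P -> EF1 w Q ->
  beta_majorizes (2^-1) (fun i => wset w (P i)) (fun i => wset w (Q i)).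
Proof.
move=> w0 pP pQ eP eQ.
set p := fun i => wset w (P i).
set q := fun i => wset w (Q i).
have ws0 : forall S, 0 <= wset w S by move=> S; apply: sumr_ge0.
have p0 : forall i, 0 <= p i by move=> i; apply: ws0.
have sumeq : \sum_i p i = \sum_i q i by rewrite /p /q !sum_part.
split => // k /andP [k1 kn1].
have n0 : (0 < n)%N by lia.
have kn : (k <= n)%N by lia.
have [m0|mpos] := posnP m.
  have z : forall x : 'I_n -> R, (forall i, x i = 0) -> topk_sum x k = 0.
    by move=> x hx; have [T [-> _ _]] := @topk_split _ _ x _ kn; apply: big1.
  have wz : forall S, wset w S = 0.
    by move=> S; apply: big1 => g _; have := ltn_ord g; move: (nat_of_ord g) => a; rewrite m0.
  by rewrite !z ?mulr0 // => i; apply: wz.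
have [i0 qmin] : exists i0, forall i, q i0 <= q i.
  exists [arg min_(i < Ordinal n0) q i]%O.
  by case: arg_minP => // j _ H i; apply: H.
have [gf gfP] : exists gf : 'I_n -> 'I_m,
    forall j, Q j != set0 -> gf j \in Q j /\ q j - w (gf j) <= q i0.
  apply: (@fin_all_exists _ (fun _ => 'I_m) (fun j g => Q j != set0 -> g \in Q j /\ q j - w g <= q i0)) => j.
  case: (boolP (Q j != set0)) => [ne|e].
    by have [g gin gle] := eQ i0 j ne; exists g.
  by exists (Ordinal mpos).
have [own ownP] : exists own : 'I_m -> 'I_n, forall g, g \in P (own g).
  by apply: (@fin_all_exists _ (fun _ => 'I_n) (fun g i => g \in P i)); case: pP.
have [J [eB cJ _]] := @topk_split _ _ q _ kn.
pose J' := [set j in J | Q j != set0].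
pose G := gf @: J'.
pose I' := own @: G.
have step1 : topk_sum q k <= k%:R * q i0 + \sum_(j in J') w (gf j).
  rewrite eB.
  apply: le_trans (_ : \sum_(j in J) (q i0 + (if Q j != set0 then w (gf j) else 0)) <= _).
    apply: ler_sum => j _; case: ifP => ne.
      by have [_ h] := gfP j ne; lra.
    have : q j = 0 by rewrite /q /wset (eqP (negbFE ne)) big_set0.
    by move=> ->; rewrite addr0; apply: ws0.
  rewrite big_split /= sumr_const cJ -big_mkcondr mulr_natl.
  by apply: lerD => //; rewrite le_eqVlt; apply/orP; left; apply/eqP; apply: eq_bigl => j; rewrite inE.
have step2 : \sum_(j in J') w (gf j) = \sum_(g in G) w g.
  rewrite big_imset //= => j j' /setIdP [_ nj] /setIdP [_ nj'] e.
  have [h1 _] := gfP j nj; have [h2 _] := gfP j' nj'.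
  rewrite e in h1; exact: pQ.2 _ _ _ h1 h2.
have step3 : \sum_(g in G) w g <= \sum_(i in I') p i.
  apply: le_trans (_ : \sum_(g in G) \sum_(i in I') (if g \in P i then w g else 0) <= _).
    apply: ler_sum => g gG; rewrite (bigD1 (own g)) /= ?imset_f // ownP lerDl.
    by apply: sumr_ge0 => i _; case: ifP.
  apply: le_trans (_ : \sum_g \sum_(i in I') (if g \in P i then w g else 0) <= _).
    rewrite [X in _ <= X](bigID (mem G)) /= lerDl.
    by apply: sumr_ge0 => g _; apply: sumr_ge0 => i _; case: ifP.
  rewrite exchange_big /=; apply: ler_sum => i _.
  by rewrite /p /wset [X in _ <= X]big_mkcond.
have step4 : \sum_(i in I') p i <= topk_sum p k.
  apply: topk_ge => //.
  apply: leq_trans (leq_imset_card _ _) _.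
  apply: leq_trans (leq_imset_card _ _) _.
  rewrite -cJ; apply: subset_leq_card; apply/subsetP => j; rewrite inE => /andP [].
  by [].
have step5 : k%:R * q i0 <= topk_sum p k.
  have h1 : n%:R * q i0 <= \sum_i q i.
    apply: le_trans (_ : \sum_(i < n) q i0 <= _).
      by rewrite sumr_const card_ord mulr_natl.
    by apply: ler_sum.
  have h2 := @topk_avg _ _ p _ kn; rewrite sumeq in h2.
  rewrite -(@ler_pM2l _ (n%:R)) ?ltr0n //.
  apply: le_trans h2.
  rewrite mulrCA; apply: ler_wpM2l => //.
have fin : topk_sum q k <= topk_sum p k + topk_sum p k.
  apply: le_trans step1 _; apply: lerD => //.
  by rewrite step2; apply: le_trans step3 step4.
lra.
Qed.
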